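(* Let $f=\frac1N\sum_{i=1}^N f_i$ satisfy the Lipschitz assumptions of the context, fix $\mathbf{x}_k\in\mathbb{R}^d$, $\epsilon>0$, $\kappa_g,\kappa_b,\kappa_t>0$ and $\delta\in(0,1)$. Let the (multi)sets $\mathcal{S}^g,\mathcal{S}^b,\mathcal{S}^t$ consist of indices drawn independently and uniformly at random with replacement from $\{1,\dots,N\}$, with sizes $$n_g=\tilde{\mathcal{O}}\left(\frac{L_f^2}{\kappa_g^2\epsilon^2}\right),\quad n_b=\tilde{\mathcal{O}}\left(\frac{L_g^2}{\kappa_b^2\epsilon^{4/3}}\right),\quad n_t=\tilde{\mathcal{O}}\left(\frac{L_b^2}{\kappa_t^2\epsilon^{2/3}}\right),$$ where $\tilde{\mathcal{O}}$ hides poly-logarithmic factors and a polynomial dependency on $d$. Then, with probability $1-\delta$, the sub-sampled quantities satisfy $\|\mathbf{g}_k-\nabla f(\mathbf{x}_k)\|\le\kappa_g\epsilon$, $\|(\mathbf{B}_k-\nabla^2 f(\mathbf{x}_k))\mathbf{s}\|\le\kappa_b\epsilon^{2/3}\|\mathbf{s}\|$ for all $\mathbf{s}\in\mathbb{R}^d$, and $\|\mathbf{T}_k[\mathbf{s}]^2-\nabla^3 f(\mathbf{x}_k)[\mathbf{s}]^2\|\le\kappa_t\epsilon^{1/3}\|\mathbf{s}\|^2$ for all $\mathbf{s}\in\mathbb{R}^d$.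
   Context: Each $f_i\in C^3(\mathbb{R}^d,\mathbb{R})$, and $f_i,\nabla f_i,\nabla^2 f_i,\nabla^3 f_i$ are Lipschitz continuous with constants $L_f,L_g,L_b,L_t$ respectively (Euclidean norm on vectors, spectral/operator norms on matrices and tensors). Sub-sampled quantities (sums counted with multiplicity): $\mathbf{g}_k=\frac{1}{|\mathcal{S}^g|}\sum_{i\in\mathcal{S}^g}\nabla f_i(\mathbf{x}_k)$, $\mathbf{B}_k=\frac{1}{|\mathcal{S}^b|}\sum_{i\in\mathcal{S}^b}\nabla^2 f_i(\mathbf{x}_k)$, $\mathbf{T}_k=\frac{1}{|\mathcal{S}^t|}\sum_{i\in\mathcal{S}^t}\nabla^3 f_i(\mathbf{x}_k)$. For a third-order tensor $T$, $T[\mathbf{s}]^2$ is the vector $(\sum_{j,k}T_{ijk}s_js_k)_i$. $N$ denotes the number of component functions. *)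

(* Defs.v *)
From HB Require Import structures.
From mathcomp Require Import all_boot all_order all_algebra.
From mathcomp Require Import all_classical all_reals all_analysis.
Set Implicit Arguments. Unset Strict Implicit. Unset Printing Implicit Defensive.
Import Order.TTheory GRing.Theory Num.Theory.
Import numFieldNormedType.Exports.
Local Open Scope ring_scope.

Section Defs.
Variable R : realType.
Variable d : nat.
Notation vec := 'rV[R]_d.

Definition ev (j : 'I_d) : vec := \row_k (k == j)%:R.

Definition enorm (v : vec) : R := Num.sqrt (\sum_j v ord0 j ^+ 2).

Definition pd (f : vec -> R) (j : 'I_d) : vec -> R := fun x => 'D_(ev j) f x.

Definition grad (f : vec -> R) (x : vec) : vec := \row_j pd f j x.
Definition hess (f : vec -> R) (x : vec) : 'M[R]_d :=
  \matrix_(i, j) pd (pd f i) j x.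
Definition third (f : vec -> R) (x : vec) (i j k : 'I_d) : R :=
  pd (pd (pd f i) j) k x.

Definition C3 (f : vec -> R) : Prop :=
  (forall x, differentiable f x) /\
  (forall i x, differentiable (pd f i) x) /\
  (forall i j x, differentiable (pd (pd f i) j) x) /\
  (forall i j k, continuous (pd (pd (pd f i) j) k)).

(* Lipschitz assumptions (Euclidean norm on vectors, operator norms on
   matrices and 3-tensors, written out via their defining inequality) *)
Definition lip_f (f : vec -> R) (L : R) : Prop :=
  forall x y, `|f x - f y| <= L * enorm (x - y).
Definition lip_grad (f : vec -> R) (L : R) : Prop :=
  forall x y, enorm (grad f x - grad f y) <= L * enorm (x - y).
Definition lip_hess (f : vec -> R) (L : R) : Prop :=
  forall x y (s : vec), enorm (s *m (hess f x - hess f y)^T)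
                <= L * enorm (x - y) * enorm s.
Definition lip_third (f : vec -> R) (L : R) : Prop :=
  forall x y (u v w : vec),
    `|\sum_i \sum_j \sum_k (third f x i j k - third f y i j k)
        * u ord0 i * v ord0 j * w ord0 k|
    <= L * enorm (x - y) * enorm u * enorm v * enorm w.

(* matrix-vector product A s (s as a row vector) *)
Definition mxapp (A : 'M[R]_d) (s : vec) : vec := s *m A^T.

Definition tapp2 (T : 'I_d -> 'I_d -> 'I_d -> R) (s : vec) : vec :=
  \row_i \sum_j \sum_k T i j k * s ord0 j * s ord0 k.
End Defs.

(* Main.v *)
Require Import Defs.
From HB Require Import structures.
From mathcomp Require Import all_boot all_order all_algebra.
From mathcomp Require Import all_classical all_reals all_analysis.
From mathcomp Require Import ring lra.
Import Order.TTheory GRing.Theory Num.Theory.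
Import numFieldNormedType.Exports.
Local Open Scope ring_scope.

Set Implicit Arguments. Unset Strict Implicit. Unset Printing Implicit Defensive.

Section H.
Variable R : realType.

Lemma exp_quad (y : R) : y <= 1/2 -> expR y <= 1 + y + 2 * y^+2.
Proof.
move=> hy.
have h1 := expR_ge1Dx (- y).
have h2 : expR y * expR (- y) = 1 by rewrite expRxMexpNx_1.
have h3 : 0 < expR y := expR_gt0 y.
have h4 : expR y * (1 - y) <= 1.
  by rewrite -h2; apply: ler_wpM2l; [exact: ltW| lra].
nra.
Qed.

Lemma card_le_sum (T I : finType) (P : pred T) (E : I -> pred T) :
  (forall w, P w -> exists i, E i w) -> (#|P| <= \sum_i #|E i|)%N.
Proof.
move=> hP.
rewrite -sum1_card.
apply: (@leq_trans (\sum_(w | P w) \sum_i (E i w : nat))).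
  apply: leq_sum => w /hP [i Ei].
  by rewrite (bigD1 i) //= Ei.
rewrite (@leq_trans (\sum_w \sum_i (E i w : nat))) //.
  by rewrite [X in (_ <= X)%N](bigID P) /= leq_addr.
rewrite exchange_big /=; apply: leq_sum => i _.
rewrite -sum1_card [X in (_ <= X)%N]big_mkcond /=.
by apply/eq_leq/eq_bigr => w _; rewrite unfold_in; case: (E i w).
Qed.


Lemma hoeff1 (n N : nat) (X : 'I_N -> R) (c t : R) :
  0 < c -> 0 < t -> \sum_i X i = 0 -> (forall i, `|X i| <= c) ->
  (#|[pred S : {ffun 'I_n -> 'I_N} | n%:R * t < \sum_j X (S j)]|%:R : R)
   <= expR (- (n%:R * t^+2 / (8 * c^+2))) * N%:R ^+ n.
Proof.
move=> c0 t0 X0 Xc.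
have Xc' : forall i, X i <= c by move=> i; exact: le_trans (ler_norm _) (Xc i).
have pos : 0 <= expR (- (n%:R * t^+2 / (8 * c^+2))) * N%:R ^+ n.
  by apply: mulr_ge0; [exact: expR_ge0 | exact: exprn_ge0].
case: (leP t (2 * c)) => htc; last first.
  have -> : #|[pred S : {ffun 'I_n -> 'I_N} | n%:R * t < \sum_j X (S j)]| = 0%N.
    apply: eq_card0 => S; rewrite !inE; apply/negbTE; rewrite -leNgt.
    apply: (@le_trans _ _ (\sum_(j < n) c)).
      by apply: ler_sum => j _.
    rewrite sumr_const card_ord -[c *+ n]mulr_natl.
    by apply: ler_wpM2l; [exact: ler0n | lra].
  by rewrite pos.
set lam := t / (4 * c^+2).
have lam0 : 0 < lam by rewrite /lam divr_gt0 // mulr_gt0 // exprn_gt0.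
have lamc : lam * c <= 1/2.
  have -> : lam * c = t / (4 * c) by rewrite /lam; field; rewrite gt_eqF.
  rewrite ler_pdivrMr ?mulr_gt0 //; lra.
set A := [pred S : {ffun 'I_n -> 'I_N} | n%:R * t < \sum_j X (S j)].
have step1 : (#|A|%:R : R) <= \sum_(S : {ffun 'I_n -> 'I_N})
     expR (lam * (\sum_j X (S j) - n%:R * t)).
  rewrite -sumr_const.
  rewrite [X in _ <= X](bigID (mem A)) /= ler_wpDr //.
    by apply: sumr_ge0 => S _; exact: expR_ge0.
  apply: ler_sum => S; rewrite inE => HS.
  apply: le_trans (expR_ge1Dx _); rewrite lerDl; apply: mulr_ge0; first exact: ltW.
  by rewrite subr_ge0 ltW.
have step2 : \sum_(S : {ffun 'I_n -> 'I_N}) expR (lam * (\sum_j X (S j) - n%:R * t))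
   = expR (- (lam * n%:R * t)) * (\sum_i expR (lam * X i)) ^+ n.
  rewrite -[in RHS](card_ord n) -prodr_const bigA_distr_bigA /= mulr_sumr.
  apply: eq_bigr => S _.
  rewrite -expR_sum -expRD; congr expR.
  rewrite mulrBr mulr_sumr card_ord mulrA addrC.
  by [].
have hsq : forall i, (lam * X i)^+2 <= lam^+2 * c^+2.
  move=> i; rewrite exprMn; apply: ler_wpM2l; first exact: sqr_ge0.
  rewrite -(real_normK (num_real (X i))); apply: lerXn2r; [by rewrite nnegrE normr_ge0 | by rewrite nnegrE ltW | exact: Xc].
have step3 : \sum_i expR (lam * X i) <= N%:R * expR (2 * (lam^+2 * c^+2)).
  apply: (@le_trans _ _ (\sum_(i < N) (1 + 2 * (lam^+2 * c^+2)) + lam * \sum_i X i)).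
    rewrite mulr_sumr -big_split /=; apply: ler_sum => i _.
    have lx : lam * X i <= 1/2.
      by apply: le_trans lamc; rewrite ler_wpM2l // ltW.
    apply: le_trans (exp_quad lx) _; have := hsq i; lra.
  rewrite X0 mulr0 addr0 sumr_const card_ord -[_ *+ N]mulr_natl.
  apply: ler_wpM2l => //; exact: expR_ge1Dx.
apply: (le_trans step1); rewrite step2.
apply: (@le_trans _ _ (expR (- (lam * n%:R * t)) * (N%:R * expR (2 * (lam^+2 * c^+2))) ^+ n)).
  rewrite ler_wpM2l ?expR_ge0 // lerXn2r ?nnegrE //.
    by apply: sumr_ge0 => i _; exact: expR_ge0.
rewrite exprMn -expRM_natl mulrCA -expRD mulrC.
have -> : - (lam * n%:R * t) + n%:R * (2 * (lam ^+ 2 * c ^+ 2))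
   = - (n%:R * t ^+ 2 / (8 * c ^+ 2)).
  by rewrite /lam; field; rewrite gt_eqF.
done.
Qed.


Lemma hoeff2 (n N : nat) (a : 'I_N -> R) (M t Xv : R) :
  (0 < N)%N -> (0 < n)%N -> (forall i, `|a i| <= M) -> 0 < t ->
  32 * M^+2 * Xv <= n%:R * t^+2 ->
  (#|[pred S : {ffun 'I_n -> 'I_N} |
      t < `|n%:R^-1 * \sum_j a (S j) - N%:R^-1 * \sum_i a i|]|%:R : R)
   <= 2 * expR (- Xv) * N%:R ^+ n.
Proof.
move=> N0 n0 aM t0 hX.
have M0 : 0 <= M by exact: le_trans (normr_ge0 _) (aM (Ordinal N0)).
have pos : 0 <= 2 * expR (- Xv) * N%:R ^+ n.
  by rewrite mulr_ge0 ?exprn_ge0 ?ler0n // mulr_ge0 ?expR_ge0.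
have Nr : (N%:R : R) != 0 by rewrite pnatr_eq0 -lt0n.
have nr : (n%:R : R) != 0 by rewrite pnatr_eq0 -lt0n.
set m := N%:R^-1 * \sum_i a i.
have mM : `|m| <= M.
  rewrite /m normrM normfV normr_nat ler_pdivrMl ?ltr0n //.
  apply: le_trans (ler_norm_sum _ _ _) _.
  apply: (@le_trans _ _ (\sum_(i < N) M)); first by apply: ler_sum => i _; exact: aM.
  by rewrite sumr_const card_ord mulr_natl.
have [M00|Mpos] := eqVneq M 0.
  rewrite M00 in aM mM.
  have -> : #|[pred S : {ffun 'I_n -> 'I_N} |
      t < `|n%:R^-1 * \sum_j a (S j) - m|]| = 0%N.
    apply: eq_card0 => S; rewrite !inE; apply/negbTE; rewrite -leNgt.
    have a0 : forall i, a i = 0 by move=> i; apply/eqP; rewrite -normr_eq0 eq_le aM normr_ge0.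
    have -> : m = 0 by apply/eqP; rewrite -normr_eq0 eq_le mM normr_ge0.
    rewrite big1 ?mulr0 ?subr0 ?normr0 ?ltW // => j _; exact: a0.
  by rewrite pos.
have Mp : 0 < M by rewrite lt_neqAle eq_sym Mpos M0.
set X := fun i => a i - m.
have X0 : \sum_i X i = 0.
  rewrite /X sumrB sumr_const card_ord /m -[_ *+ N]mulr_natl mulrA mulfV // mul1r subrr //.
have Xc : forall i, `|X i| <= 2 * M.
  move=> i; apply: le_trans (ler_normB _ _) _; have := aM i; lra.
have nX : forall i, `|(- X) i| <= 2 * M by move=> i; rewrite /= normrN.
have nX0 : \sum_i (- X) i = 0 by rewrite /= sumrN X0 oppr0.
have dev : forall S : {ffun 'I_n -> 'I_N},
    n%:R^-1 * \sum_j a (S j) - m = n%:R^-1 * \sum_j X (S j).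
  move=> S; rewrite /X sumrB sumr_const card_ord mulrBr -[m *+ n]mulr_natl mulrA mulVf //.
  by rewrite mul1r.
have sub := @card_le_sum _ bool
  [pred S : {ffun 'I_n -> 'I_N} | t < `|n%:R^-1 * \sum_j a (S j) - m|]
  (fun b => if b then [pred S : {ffun 'I_n -> 'I_N} | n%:R * t < \sum_j X (S j)]
            else [pred S : {ffun 'I_n -> 'I_N} | n%:R * t < \sum_j (- X) (S j)]).
rewrite big_bool /= in sub.
have np : 0 < (n%:R : R) by rewrite ltr0n.
lapply sub; last first.
  move=> S; rewrite dev normrM normfV normr_nat => H.
  have H' : n%:R * t < `|\sum_j X (S j)|.
    by rewrite -(ltr_pM2l np) mulrA mulfV ?mul1r in H.
  case: (ler0P (\sum_j X (S j))) => hs.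
    exists false; rewrite /= sumrN; move: H'; rewrite ler0_norm //.
  by exists true; rewrite /=; move: H'; rewrite gtr0_norm.
move=> {}sub.
rewrite -(ler_nat R) natrD in sub.
apply: le_trans sub _.
have e1 : expR (- (n%:R * t ^+ 2 / (8 * (2 * M) ^+ 2))) <= expR (- Xv).
  rewrite ler_expR lerN2 ler_pdivlMr; last by rewrite mulr_gt0 // exprn_gt0 // mulr_gt0.
  by rewrite mulrC; apply: le_trans hX; rewrite le_eqVlt; apply/orP; left; apply/eqP; rewrite exprMn; ring.
have c0 : 0 < 2 * M by rewrite mulr_gt0.
have h1 := hoeff1 n c0 t0 X0 Xc.
have h2 := hoeff1 n c0 t0 nX0 nX.
have eN : 0 <= (N%:R : R) ^+ n by rewrite exprn_ge0.
rewrite -!mulrA mulr2n mulrDl; apply: lerD.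
  by apply: le_trans h1 _; rewrite mul1r; apply: ler_wpM2r.
by apply: le_trans h2 _; rewrite mul1r; apply: ler_wpM2r.
Qed.

Lemma sample_bound (I : finType) (n N : nat) (a : I -> 'I_N -> R) (M t Xv : R)
  (P : pred {ffun 'I_n -> 'I_N}) :
  (0 < N)%N -> (0 < n)%N -> (forall k i, `|a k i| <= M) -> 0 < t ->
  32 * M^+2 * Xv <= n%:R * t^+2 ->
  (forall S : {ffun 'I_n -> 'I_N}, (forall k, `|n%:R^-1 * \sum_j a k (S j) - N%:R^-1 * \sum_i a k i| <= t)
     -> ~~ P S) ->
  (#|P|%:R : R) <= #|I|%:R * (2 * expR (- Xv) * N%:R ^+ n).
Proof.
move=> N0 n0 aM t0 hX hP.
have cover : forall S, P S -> exists k, [pred S : {ffun 'I_n -> 'I_N} |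
   t < `|n%:R^-1 * \sum_j a k (S j) - N%:R^-1 * \sum_i a k i|] S.
  move=> S PS.
  case E: [exists k, t < `|n%:R^-1 * \sum_j a k (S j) - N%:R^-1 * \sum_i a k i|].
    by case/existsP: E => k hk; exists k.
  exfalso; move/negbT: E; rewrite negb_exists => /forallP E.
  by move: PS; apply/negP/hP => k; rewrite leNgt; exact: E.
have H := card_le_sum cover.
rewrite -(ler_nat R) natr_sum in H.
apply: le_trans H _.
rewrite mulr_natl -sumr_const; apply: ler_sum => k _.
exact: hoeff2.
Qed.

End H.

Section D.
Local Open Scope classical_set_scope.
Variable R : realType.
Variable d : nat.
Notation vec := 'rV[R]_d.

Lemma enorm_ge0 (v : vec) : 0 <= enorm v.
Proof. exact: sqrtr_ge0. Qed.

Lemma coord_le (v : vec) j : `|v ord0 j| <= enorm v.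
Proof.
rewrite /enorm -(sqrtr_sqr (v ord0 j)) ler_sqrt; last first.
  by apply: sumr_ge0 => i _; exact: sqr_ge0.
rewrite (bigD1 j) //= lerDl; apply: sumr_ge0 => i _; exact: sqr_ge0.
Qed.

Lemma enorm_le_sum (v : vec) : enorm v <= \sum_j `|v ord0 j|.
Proof.
rewrite /enorm -(@ger0_norm _ (\sum_j `|v ord0 j|)); last by apply: sumr_ge0.
rewrite -sqrtr_sqr ler_sqrt; last exact: sqr_ge0.
rewrite [X in _ <= X]expr2 mulr_suml; apply: ler_sum => i _.
rewrite -(real_normK (num_real (v ord0 i))) expr2; apply: ler_wpM2l => //.
rewrite (bigD1 i) //= lerDl; apply: sumr_ge0 => k _; exact: normr_ge0.
Qed.

Lemma enorm_bound (v : vec) u : (forall j, `|v ord0 j| <= u) -> enorm v <= d%:R * u.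
Proof.
move=> h; apply: le_trans (enorm_le_sum v) _.
apply: (@le_trans _ _ (\sum_(j < d) u)); first by apply: ler_sum => j _; exact: h.
by rewrite sumr_const card_ord mulr_natl.
Qed.

Lemma enormZ (h : R) (v : vec) : enorm (h *: v) = `|h| * enorm v.
Proof.
rewrite /enorm -sqrtr_sqr -sqrtrM ?sqr_ge0 // mulr_sumr; congr Num.sqrt.
by apply: eq_bigr => j _; rewrite mxE exprMn.
Qed.

Lemma enorm_ev j : enorm (ev R (j : 'I_d)) = 1.
Proof.
rewrite /enorm (bigD1 j) //= big1 ?addr0.
  by rewrite !mxE eqxx expr1n sqrtr1.
by move=> k /negbTE kj; rewrite !mxE kj expr0n.
Qed.



Lemma deriv_bound (g : vec -> R) (x v : vec) (K : R) : derivable g x v ->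
  (forall h : R, h != 0 -> `|g (h *: v + x) - g x| <= K * `|h|) -> `|'D_v g x| <= K.
Proof.
move=> dg hb.
have L : (fun h : R => h^-1 *: ((g \o shift x) (h *: v) - g x)) @ 0^' --> 'D_v g x.
  exact: dg.
apply: (cvgr_to_le (cvg_norm L)).
near=> h.
have h0 : h != 0 by near: h; exact: nbhs_dnbhs_neq.
rewrite /= normrZ normfV ler_pdivrMl ?normr_gt0 // mulrC; exact: hb.
Unshelve. all: by end_near.
Qed.

Lemma deriv_avg n (g : 'I_n -> vec -> R) (c : R) (v : vec) :
  (forall i y, derivable (g i) y v) ->
  forall x, 'D_v (fun y => c * \sum_i g i y) x = c * \sum_i 'D_v (g i) x.
Proof.
move=> dg x.
have -> : (fun y => c * \sum_i g i y) = c \*: \sum_i g i.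
  by apply: funext => y; rewrite /= fct_sumE.
rewrite deriveZ; last by apply: derivable_sum => i; exact: dg.
by rewrite derive_sum.
Qed.

Lemma pd_avg N (f : 'I_N -> vec -> R) j :
  (forall i y, derivable (f i) y (ev R j)) ->
  pd (fun x => N%:R^-1 * \sum_i f i x) j = fun x => N%:R^-1 * \sum_i pd (f i) j x.
Proof. by move=> h; apply: funext => x; rewrite /pd deriv_avg. Qed.

Lemma C3_d1 (g : vec -> R) j y : C3 g -> derivable g y (ev R j).
Proof. by case=> h _; apply: diff_derivable; exact: h. Qed.
Lemma C3_d2 (g : vec -> R) i j y : C3 g -> derivable (pd g i) y (ev R j).
Proof. by case=> _ [h _]; apply: diff_derivable; exact: h. Qed.
Lemma C3_d3 (g : vec -> R) i j k y : C3 g -> derivable (pd (pd g i) j) y (ev R k).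
Proof. by case=> _ [_ [h _]]; apply: diff_derivable; exact: h. Qed.

Lemma grad_good N n (f : 'I_N -> vec -> R) (xk : vec) (S : {ffun 'I_n -> 'I_N}) (u : R) :
  (forall i, C3 (f i)) ->
  (forall j, `|n%:R^-1 * \sum_l pd (f (S l)) j xk - N%:R^-1 * \sum_i pd (f i) j xk| <= u) ->
  enorm (n%:R^-1 *: \sum_l grad (f (S l)) xk - grad (fun x => N%:R^-1 * \sum_i f i x) xk)
    <= d%:R * u.
Proof.
move=> Cf H; apply: enorm_bound => j.
rewrite !mxE summxE.
rewrite pd_avg; last by move=> i y; exact: C3_d1.
move: (H j); congr (`|_ - _| <= _); congr (_ * _); apply: eq_bigr => l _; rewrite mxE //.
Qed.

Lemma hess_good N n (f : 'I_N -> vec -> R) (xk : vec) (S : {ffun 'I_n -> 'I_N}) (u : R) :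
  (forall i, C3 (f i)) ->
  (forall a b, `|n%:R^-1 * \sum_l pd (pd (f (S l)) a) b xk
                 - N%:R^-1 * \sum_i pd (pd (f i) a) b xk| <= u) ->
  forall s, enorm (mxapp (n%:R^-1 *: \sum_l hess (f (S l)) xk
                          - hess (fun x => N%:R^-1 * \sum_i f i x) xk) s)
    <= d%:R * (d%:R * (enorm s * u)).
Proof.
move=> Cf H s; apply: enorm_bound => a.
rewrite /mxapp mxE.
apply: le_trans (ler_norm_sum _ _ _) _.
apply: (@le_trans _ _ (\sum_(k < d) enorm s * u)); last by rewrite sumr_const card_ord mulr_natl.
apply: ler_sum => k _; rewrite normrM; apply: ler_pM => //; first exact: coord_le.
rewrite !mxE summxE.
rewrite (pd_avg (j:=a)); last by move=> i y; exact: C3_d1.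
rewrite (pd_avg (j:=k)); last by move=> i y; exact: C3_d2.
move: (H a k); congr (`|_ - _| <= _); congr (_ * _); apply: eq_bigr => l _; rewrite mxE //.
Qed.

Lemma third_good N n (f : 'I_N -> vec -> R) (xk : vec) (S : {ffun 'I_n -> 'I_N}) (u : R) :
  (forall i, C3 (f i)) ->
  (forall a b c, `|n%:R^-1 * \sum_l third (f (S l)) xk a b c
                 - N%:R^-1 * \sum_i third (f i) xk a b c| <= u) ->
  forall s, enorm (tapp2 (fun a b c => n%:R^-1 * \sum_l third (f (S l)) xk a b c) s
                   - tapp2 (third (fun x => N%:R^-1 * \sum_i f i x) xk) s)
    <= d%:R * (d%:R * (d%:R * (u * enorm s ^+ 2))).
Proof.
move=> Cf H s; apply: enorm_bound => a.
rewrite !mxE -sumrB.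
apply: le_trans (ler_norm_sum _ _ _) _.
apply: (@le_trans _ _ (\sum_(j < d) d%:R * (u * enorm s ^+ 2))).
2: by rewrite sumr_const card_ord -[_ *+ d]mulr_natl.
apply: ler_sum => j _; rewrite -sumrB.
apply: le_trans (ler_norm_sum _ _ _) _.
apply: (@le_trans _ _ (\sum_(k < d) (u * enorm s ^+ 2)));
  last by rewrite sumr_const card_ord -[_ *+ d]mulr_natl.
apply: ler_sum => k _.
rewrite -!mulrBl !normrM expr2 mulrA.
apply: ler_pM; rewrite ?mulr_ge0 ?normr_ge0 //; last exact: coord_le.
apply: ler_pM; rewrite ?normr_ge0 //; last exact: coord_le.
rewrite /third (pd_avg (j:=a)); last by move=> i y; exact: C3_d1.
rewrite (pd_avg (j:=j)); last by move=> i y; exact: C3_d2.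
rewrite (pd_avg (j:=k)); last by move=> i y; exact: C3_d3.
exact: (H a j k).
Qed.

Lemma ev_mul (A : 'M[R]_d) a b : (ev R b *m A^T) ord0 a = A a b.
Proof.
rewrite mxE (bigD1 b) //= big1 ?addr0.
  by rewrite !mxE eqxx mul1r.
by move=> k /negbTE kb; rewrite !mxE kb mul0r.
Qed.

Lemma bnd1 (g : vec -> R) L j x : C3 g -> lip_f g L -> `|pd g j x| <= L.
Proof.
move=> C Lg; apply: deriv_bound; first exact: C3_d1.
by move=> h h0; apply: le_trans (Lg _ _) _; rewrite addrK enormZ enorm_ev mulr1.
Qed.

Lemma bnd2 (g : vec -> R) L a b x : C3 g -> lip_grad g L -> `|pd (pd g a) b x| <= L.
Proof.
move=> C Lg; apply: deriv_bound; first exact: C3_d2.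
move=> h h0.
have := coord_le (grad g (h *: ev R b + x) - grad g x) a; rewrite !mxE => c.
by apply: le_trans c _; apply: le_trans (Lg _ _) _; rewrite addrK enormZ enorm_ev mulr1.
Qed.

Lemma bnd3 (g : vec -> R) L a b c x : C3 g -> lip_hess g L -> `|pd (pd (pd g a) b) c x| <= L.
Proof.
move=> C Lg; apply: deriv_bound; first exact: C3_d3.
move=> h h0.
have := coord_le (ev R b *m (hess g (h *: ev R c + x) - hess g x)^T) a.
rewrite ev_mul !mxE => e.
apply: le_trans e _; apply: le_trans (Lg _ _ _) _.
by rewrite addrK enormZ !enorm_ev !mulr1.
Qed.

End D.

Section N.
Variable R : realType.

Lemma nsample (M kap e n D L Xv : R) : 0 < kap -> 0 < e -> 1 <= D -> 0 <= L ->
  Xv <= 5 * D * (1 + L) ->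
  160 * (D * (1 + L))^+7 * (M^+2 / (kap^+2 * e^+2)) <= n ->
  32 * M^+2 * Xv <= n * (kap * e / D^+3)^+2.
Proof.
move=> k0 e0 D1 L0 hX hn.
have q0 : 0 < kap^+2 * e^+2 by rewrite mulr_gt0 ?exprn_gt0.
have D0 : 0 < D by lra.
have D60 : 0 < D^+6 by rewrite exprn_gt0.
have hn' : 160 * (D * (1 + L))^+7 * M^+2 <= n * (kap^+2 * e^+2).
  by move: hn; rewrite mulrA ler_pdivrMr.
have -> : n * (kap * e / D^+3)^+2 = n * (kap^+2 * e^+2) / D^+6.
  by field; rewrite gt_eqF.
rewrite ler_pdivlMr //; apply: le_trans hn'.
have M2 : 0 <= M^+2 by exact: sqr_ge0.
have L7 : 1 + L <= (1 + L)^+7.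
  rewrite exprS ler_peMr ?exprn_ege1 //; lra.
apply: (@le_trans _ _ (32 * M^+2 * (5 * D * (1 + L)) * D^+6)).
  apply: ler_wpM2r; first exact: ltW.
  by apply: ler_wpM2l => //; rewrite mulr_ge0.
have h7 : D^+7 * (1+L) <= D^+7 * (1+L)^+7.
  by apply: ler_wpM2l => //; rewrite exprn_ge0 // ltW.
have -> : 32 * M^+2 * (5 * D * (1 + L)) * D^+6 = 160 * M^+2 * (D^+7 * (1 + L)) by ring.
have -> : 160 * (D * (1+L))^+7 * M^+2 = 160 * M^+2 * (D^+7 * (1+L)^+7) by ring.
by apply: ler_wpM2l => //; rewrite mulr_ge0.
Qed.

Lemma keyexp (d : nat) (del : R) : 0 < del -> del < 1 ->
  (d.+1%:R : R)^+3 * (2 * expR (- (5 + 3 * d%:R + ln del^-1))) <= del / 3.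
Proof.
move=> d0 d1.
set D := (d.+1%:R : R).
set E := expR (5 + 3 * d%:R + ln del^-1).
have hD : D = 1 + d%:R by rewrite /D -addn1 natrD addrC.
have e5 : 6 <= expR (5 : R) by have := expR_ge1Dx (5 : R); lra.
have ed : D <= expR (d%:R : R) by rewrite hD expR_ge1Dx.
have D0 : 0 <= D by rewrite hD; have := ler0n R d; lra.
have ed3 : D^+3 <= expR (d%:R : R) ^+ 3 by apply: lerXn2r; rewrite ?nnegrE ?expR_ge0.
have eL : expR (ln del^-1) = del^-1 by rewrite lnK // posrE invr_gt0.
have hE : E = expR 5 * expR (d%:R) ^+ 3 * del^-1.
  by rewrite /E !expRD eL -expRM_natl.
have hE2 : 6 * D^+3 <= E * del.
  rewrite hE -mulrA mulVf ?gt_eqF // mulr1.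
  apply: ler_pM => //; first by rewrite exprn_ge0.
have Ei : E * E^-1 = 1 by rewrite mulfV // gt_eqF // expR_gt0.
have Ei0 : 0 < E^-1 by rewrite invr_gt0 expR_gt0.
rewrite expRN -/E.
set D3 := D^+3 in hE2 *.
set Einv := E^-1 in Ei Ei0 *.
nra.
Qed.

End N.

Unset Implicit Arguments.
Set Strict Implicit.

Lemma card_fst (A B C : finType) (P : pred A) :
  #|[pred w : A * B * C | P w.1.1]| = (#|P| * #|B| * #|C|)%N.
Proof.
rewrite -!cardX; apply: eq_card => -[[a b] c]; by rewrite !inE /= ?andbT.
Qed.
Lemma card_snd (A B C : finType) (P : pred B) :
  #|[pred w : A * B * C | P w.1.2]| = (#|A| * #|P| * #|C|)%N.
Proof.
rewrite -!cardX; apply: eq_card => -[[a b] c]; by rewrite !inE /= ?andbT.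
Qed.
Lemma card_thd (A B C : finType) (P : pred C) :
  #|[pred w : A * B * C | P w.2]| = (#|A| * #|B| * #|P|)%N.
Proof.
rewrite -!cardX; apply: eq_card => -[[a b] c]; by rewrite !inE /= ?andbT.
Qed.

Lemma pow_sq (R : realType) (e a : R) : 0 < e -> e `^ (a + a) = (e `^ a)^+2.
Proof. move=> e0; rewrite powRD; first by rewrite expr2. by rewrite (gt_eqF e0) implybT. Qed.

Lemma scale_le (R : realType) (k c D3 : R) : 0 < D3 -> 0 <= c -> k <= D3 -> k * (c / D3) <= c.
Proof.
move=> D0 c0 hk; rewrite mulrA ler_pdivrMr // mulrC; exact: ler_wpM2l.
Qed.

Theorem lemma7 (R : realType) :
  exists (C : R) (p : nat), 0 < C /\
  forall (d N : nat) (f : 'I_N -> 'rV[R]_d -> R) (Lf Lg Lb Lt : R)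
    (xk : 'rV[R]_d) (eps kg kb kt delta : R) (ng nb nt : nat),
    (0 < N)%N ->
    (forall i, C3 (f i)) ->
    (forall i, lip_f (f i) Lf) -> (forall i, lip_grad (f i) Lg) ->
    (forall i, lip_hess (f i) Lb) -> (forall i, lip_third (f i) Lt) ->
    0 < eps -> 0 < kg -> 0 < kb -> 0 < kt -> 0 < delta < 1 ->
    (0 < ng)%N -> (0 < nb)%N -> (0 < nt)%N ->
    let polylog := (C * ((d.+1)%:R * (1 + ln (delta^-1))) ^+ p) in
    polylog * (Lf ^+ 2 / (kg ^+ 2 * eps ^+ 2)) <= ng%:R ->
    polylog * (Lg ^+ 2 / (kb ^+ 2 * eps `^ (4 / 3))) <= nb%:R ->
    polylog * (Lb ^+ 2 / (kt ^+ 2 * eps `^ (2 / 3))) <= nt%:R ->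
    let F := fun x => N%:R^-1 * \sum_i f i x in
    (* sample space: three independent i.i.d. uniform index samples
       (with replacement), with the uniform probability on the product *)
    let good (Sg : {ffun 'I_ng -> 'I_N}) (Sb : {ffun 'I_nb -> 'I_N})
             (St : {ffun 'I_nt -> 'I_N}) : Prop :=
      let gk := ng%:R^-1 *: \sum_(j < ng) grad (f (Sg j)) xk in
      let Bk := nb%:R^-1 *: \sum_(j < nb) hess (f (Sb j)) xk in
      let Tk := fun a b c => nt%:R^-1 * \sum_(j < nt) third (f (St j)) xk a b c in
      [/\ enorm (gk - grad F xk) <= kg * eps,
          forall s, enorm (mxapp (Bk - hess F xk) s)
                    <= kb * eps `^ (2 / 3) * enorm s
        & forall s, enorm (tapp2 Tk s - tapp2 (third F xk) s)
                    <= kt * eps `^ (1 / 3) * enorm s ^+ 2] in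
    1 - delta <=
      #|[set w : {ffun 'I_ng -> 'I_N} * {ffun 'I_nb -> 'I_N}
                 * {ffun 'I_nt -> 'I_N} | `[< good w.1.1 w.1.2 w.2 >]]|%:R
      / #|{: {ffun 'I_ng -> 'I_N} * {ffun 'I_nb -> 'I_N}
             * {ffun 'I_nt -> 'I_N}}|%:R.
Proof.
exists 160, 7; split; first lra.
move=> d N f Lf Lg Lb Lt xk eps kg kb kt delta ng nb nt N0 Cf lf lg lb lt e0 kg0 kb0 kt0
  /andP[dl0 dl1] ng0 nb0 nt0 polylog hng hnb hnt.
cbv zeta.
set D := (d.+1%:R : R).
set L := ln delta^-1.
set Xv := 5 + 3 * d%:R + L.
have hD : D = 1 + d%:R by rewrite /D -addn1 natrD addrC.
have d0 : 0 <= (d%:R : R) := ler0n R d.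
have D1 : 1 <= D by rewrite hD; lra.
have L0 : 0 <= L by apply: ln_ge0; rewrite invf_ge1 // ltW.
have hXv : Xv <= 5 * D * (1 + L) by rewrite /Xv hD; nra.
have kexp : D^+3 * (2 * expR (- Xv)) <= delta / 3 := keyexp d dl0 dl1.
have dD1 : d%:R <= D^+3 :> R.
  by apply: le_trans (_ : D <= D^+3); [lra | rewrite ler_eXnr].
have dD2 : (d%:R * d%:R : R) <= D^+3 by rewrite hD; nra.
have dD3 : (d%:R * d%:R * d%:R : R) <= D^+3 by rewrite hD; nra.
have D0 : 0 < D by lra.
have D30 : 0 < D^+3 by rewrite exprn_gt0.
have fin : forall (k : R) (n : nat), k <= D^+3 ->
    k * (2 * expR (- Xv) * N%:R ^+ n) <= delta / 3 * N%:R ^+ n.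
  move=> k n hk; rewrite mulrA; apply: ler_wpM2r; first by rewrite exprn_ge0.
  apply: le_trans kexp; apply: ler_wpM2r => //; by rewrite mulr_ge0 // expR_ge0.
pose PA := [pred Sg : {ffun 'I_ng -> 'I_N} | ~~ (enorm (ng%:R^-1 *:
    \sum_(j < ng) grad (f (Sg j)) xk - grad (fun x => N%:R^-1 * \sum_i f i x) xk)
    <= kg * eps)].
have bA : (#|PA|%:R : R) <= delta / 3 * N%:R ^+ ng.
  set tg := kg * eps / D^+3.
  have tg0 : 0 < tg by rewrite /tg divr_gt0 // mulr_gt0.
  apply: le_trans (sample_bound (I:='I_d) (n:=ng) (a := fun j i => pd (f i) j xk)
     (M:=Lf) (t:=tg) (Xv:=Xv) (P:=PA) N0 ng0 _ tg0 _ _) _.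
  - by move=> j i; exact: bnd1.
  - exact: (nsample (L:=L) kg0 e0 D1 L0 hXv hng).
  - move=> S H; rewrite inE negbK; apply: le_trans (grad_good Cf H) _.
    rewrite /tg mulrA ler_pdivrMr // mulrC; apply: ler_wpM2l => //.
    by rewrite mulr_ge0 // ltW.
  by rewrite card_ord; apply: fin.
set e2 := eps `^ (2/3).
have e20 : 0 < e2 by rewrite powR_gt0.
have E43 : eps `^ (4/3) = e2^+2 by rewrite -pow_sq //; congr (_ `^ _); field.
rewrite E43 in hnb.
pose PB := [pred Sb : {ffun 'I_nb -> 'I_N} | ~~ `[< forall s, enorm (mxapp (nb%:R^-1 *:
    \sum_(j < nb) hess (f (Sb j)) xk - hess (fun x => N%:R^-1 * \sum_i f i x) xk) s)
    <= kb * e2 * enorm s >]].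
have bB : (#|PB|%:R : R) <= delta / 3 * N%:R ^+ nb.
  set tb := kb * e2 / D^+3.
  have tb0 : 0 < tb by rewrite /tb divr_gt0 // mulr_gt0.
  apply: le_trans (sample_bound (I:=('I_d * 'I_d)%type) (n:=nb)
     (a := fun p i => pd (pd (f i) p.1) p.2 xk)
     (M:=Lg) (t:=tb) (Xv:=Xv) (P:=PB) N0 nb0 _ tb0 _ _) _.
  - by move=> p i; exact: bnd2.
  - exact: (nsample (L:=L) kb0 e20 D1 L0 hXv hnb).
  - move=> S H; rewrite inE negbK; apply/asboolP => s.
    apply: le_trans (hess_good Cf (fun a b => H (a, b)) s) _.
    have -> : d%:R * (d%:R * (enorm s * tb)) = (d%:R * d%:R * tb) * enorm s by ring.
    apply: ler_wpM2r; first exact: enorm_ge0.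
    by apply: scale_le => //; rewrite mulr_ge0 // ltW.
  by rewrite card_prod card_ord natrM; apply: fin.
set e1 := eps `^ (1/3).
have e10 : 0 < e1 by rewrite powR_gt0.
have E23 : eps `^ (2/3) = e1^+2 by rewrite -pow_sq //; congr (_ `^ _); field.
rewrite E23 in hnt.
pose PC := [pred St : {ffun 'I_nt -> 'I_N} | ~~ `[< forall s, enorm (tapp2
    (fun a b c => nt%:R^-1 * \sum_(j < nt) third (f (St j)) xk a b c) s
    - tapp2 (third (fun x => N%:R^-1 * \sum_i f i x) xk) s)
    <= kt * e1 * enorm s ^+ 2 >]].
have bC : (#|PC|%:R : R) <= delta / 3 * N%:R ^+ nt.
  set tc := kt * e1 / D^+3.
  have tc0 : 0 < tc by rewrite /tc divr_gt0 // mulr_gt0.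
  apply: le_trans (sample_bound (I:=('I_d * 'I_d * 'I_d)%type) (n:=nt)
     (a := fun p i => third (f i) xk p.1.1 p.1.2 p.2)
     (M:=Lb) (t:=tc) (Xv:=Xv) (P:=PC) N0 nt0 _ tc0 _ _) _.
  - by move=> p i; exact: bnd3.
  - exact: (nsample (L:=L) kt0 e10 D1 L0 hXv hnt).
  - move=> S H; rewrite inE negbK; apply/asboolP => s.
    apply: le_trans (third_good Cf (fun a b c => H (a, b, c)) s) _.
    have -> : d%:R * (d%:R * (d%:R * (tc * enorm s ^+ 2)))
       = (d%:R * d%:R * d%:R * tc) * enorm s ^+ 2 by ring.
    apply: ler_wpM2r; first by rewrite exprn_ge0 // enorm_ge0.
    by apply: scale_le => //; rewrite mulr_ge0 // ltW.
  by rewrite !card_prod card_ord !natrM; apply: fin.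
set G := [set _ | _].
pose E := fun i : 'I_3 => match val i with
  | 0 => [pred w : {ffun 'I_ng -> 'I_N} * {ffun 'I_nb -> 'I_N} * {ffun 'I_nt -> 'I_N} | PA w.1.1]
  | 1 => [pred w : {ffun 'I_ng -> 'I_N} * {ffun 'I_nb -> 'I_N} * {ffun 'I_nt -> 'I_N} | PB w.1.2]
  | _ => [pred w : {ffun 'I_ng -> 'I_N} * {ffun 'I_nb -> 'I_N} * {ffun 'I_nt -> 'I_N} | PC w.2]
  end.
have cover : forall w, [pred w | w \in ~: G] w -> exists i : 'I_3, E i w.
  move=> [[Sg Sb] St]; rewrite /= !inE => /asboolPn Hn.
  case hA : (PA Sg); first by exists ord0.
  case hB : (PB Sb); first by exists (Ordinal (isT : (1 < 3)%N)).
  case hC : (PC St); first by exists (Ordinal (isT : (2 < 3)%N)).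
  exfalso; apply: Hn.
  move: hA hB hC; rewrite /PA /PB /PC /= => /negbFE hA /negbFE /asboolP hB /negbFE /asboolP hC.
  by split.
have hc := card_le_sum cover.
have hs : (\sum_(i < 3) #|E i| = #|[pred w : {ffun 'I_ng -> 'I_N} * {ffun 'I_nb -> 'I_N} * {ffun 'I_nt -> 'I_N} | PA w.1.1]|
  + #|[pred w : {ffun 'I_ng -> 'I_N} * {ffun 'I_nb -> 'I_N} * {ffun 'I_nt -> 'I_N} | PB w.1.2]|
  + #|[pred w : {ffun 'I_ng -> 'I_N} * {ffun 'I_nb -> 'I_N} * {ffun 'I_nt -> 'I_N} | PC w.2]|)%N.
  by rewrite !big_ord_recr big_ord0 /=.
rewrite hs in hc.
rewrite card_fst card_snd card_thd !card_ffun !card_ord in hc.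
have eG : #|[pred w | w \in ~: G]| = #|~: G| by apply: eq_card.
rewrite eG in hc.
have hCG := cardsC G.
rewrite -(ler_nat R) !natrD !natrM !natrX in hc.
have hO : (#|{: {ffun 'I_ng -> 'I_N} * {ffun 'I_nb -> 'I_N} * {ffun 'I_nt -> 'I_N}}|%:R : R)
   = N%:R ^+ ng * N%:R ^+ nb * N%:R ^+ nt.
  by rewrite !card_prod !card_ffun !card_ord !natrM !natrX.
move: hCG => /(congr1 (fun n => n%:R : R)); rewrite natrD hO => hCG.
have a0 : 0 < (N%:R : R) ^+ ng by rewrite exprn_gt0 // ltr0n.
have b0 : 0 < (N%:R : R) ^+ nb by rewrite exprn_gt0 // ltr0n.
have c0 : 0 < (N%:R : R) ^+ nt by rewrite exprn_gt0 // ltr0n.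
have tA : #|PA|%:R * N%:R ^+ nb * N%:R ^+ nt <= delta / 3 * N%:R ^+ ng * N%:R ^+ nb * N%:R ^+ nt :> R.
  by apply: ler_wpM2r; [exact: ltW | apply: ler_wpM2r; [exact: ltW | exact: bA]].
have tB : N%:R ^+ ng * #|PB|%:R * N%:R ^+ nt <= delta / 3 * N%:R ^+ ng * N%:R ^+ nb * N%:R ^+ nt :> R.
  have -> : delta / 3 * N%:R ^+ ng * N%:R ^+ nb * N%:R ^+ nt
     = N%:R ^+ ng * (delta / 3 * N%:R ^+ nb) * N%:R ^+ nt :> R by ring.
  by apply: ler_wpM2r; [exact: ltW | apply: ler_wpM2l; [exact: ltW | exact: bB]].
have tC : N%:R ^+ ng * N%:R ^+ nb * #|PC|%:R <= delta / 3 * N%:R ^+ ng * N%:R ^+ nb * N%:R ^+ nt :> R.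
  have -> : delta / 3 * N%:R ^+ ng * N%:R ^+ nb * N%:R ^+ nt
     = N%:R ^+ ng * N%:R ^+ nb * (delta / 3 * N%:R ^+ nt) :> R by ring.
  by apply: ler_wpM2l; [rewrite mulr_ge0 // ltW | exact: bC].
have abc0 : 0 < (N%:R : R) ^+ ng * N%:R ^+ nb * N%:R ^+ nt by rewrite !mulr_gt0.
rewrite ler_pdivlMr //.
set O := N%:R ^+ ng * N%:R ^+ nb * N%:R ^+ nt in hCG abc0 tA tB tC *.
have hT : delta / 3 * N%:R ^+ ng * N%:R ^+ nb * N%:R ^+ nt = delta / 3 * O by rewrite /O !mulrA.
rewrite hT in tA tB tC.
nra.
Qed.
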